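(* For every $\varepsilon \in (0,1)$, $\ell, z \in \mathbb{N}$ and every time series $x\in \mathbb{R}^z$ there exists a time series $x' \in \mathbb{R}^{z'}$ with $z' \in O\big(2^{O(\ell/\epsilon)^{(2\ell+2)}}\big)$ such that for every $y\in \mathbb{R}^\ell$, \[ (1-\varepsilon)\, \mathbf{d}_{dF}(x,y) \le \mathbf{d}_{dF}(x',y) \le (1+\varepsilon)\, \mathbf{d}_{dF}(x,y). \]
   Context: For $x\in\mathbb{R}^z$ and $y\in\mathbb{R}^\ell$, the discrete Fréchet distance is $\mathbf{d}_{dF}(x,y)=\min_T\max_{(i,j)\in T}|x_i-y_j|$, where $T$ ranges over traversals: sequences of index pairs from $(1,1)$ to $(z,\ell)$ in which each step increases each index by $0$ or $1$ and at least one index by $1$. *)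

(* Defs.v *)
From HB Require Import structures.
From mathcomp Require Import all_boot all_order all_algebra.
From mathcomp Require Import classical_sets reals exp.
Set Implicit Arguments. Unset Strict Implicit. Unset Printing Implicit Defensive.
Import Order.TTheory GRing.Theory Num.Theory.
Local Open Scope ring_scope.

(* A time series in R^z is a sequence of reals of size z; entries are
   0-indexed: x_i is nth 0 x i. *)

Definition trav_step (p q : nat * nat) : bool :=
  [&& (q.1 == p.1) || (q.1 == p.1.+1),
      (q.2 == p.2) || (q.2 == p.2.+1) & p != q].

(* T is a traversal from (0,0) to (z-1, l-1) (0-indexed version of (1,1)..(z,l)) *)
Definition traversal (z l : nat) (T : seq (nat * nat)) : Prop :=
  exists s, T = (0%N, 0%N) :: s /\ path trav_step (0%N, 0%N) s /\
            last (0%N, 0%N) s = (z.-1, l.-1).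

Definition trav_cost (R : realType) (x y : seq R) (T : seq (nat * nat)) : R :=
  \big[Num.max/0]_(p <- T) `|nth 0 x p.1 - nth 0 y p.2|.

(* discrete Fréchet distance: min over traversals (the set of values is finite
   and nonempty for nonempty x, y, so the infimum is a minimum) *)
Definition dF (R : realType) (x y : seq R) : R :=
  inf [set r : R | exists T, traversal (size x) (size y) T /\ r = trav_cost x y T].

(* Main.v *)
Require Import Defs.
From HB Require Import structures.
From mathcomp Require Import all_boot all_order all_algebra.
From mathcomp Require Import classical_sets reals exp.
From mathcomp Require Import zify ring lra.
Import Order.TTheory GRing.Theory Num.Theory.
Local Open Scope ring_scope.
Set Implicit Arguments. Unset Strict Implicit. Unset Printing Implicit Defensive.
Lemma path_mono (p0 : nat * nat) s :
  path trav_step p0 s -> forall q, q \in p0 :: s ->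
  [/\ (p0.1 <= q.1)%N, (p0.2 <= q.2)%N, (q.1 <= (last p0 s).1)%N & (q.2 <= (last p0 s).2)%N].
Proof.
elim: s p0 => [|p s IH] p0 /=.
  by move=> _ q; rewrite inE => /eqP ->; rewrite !leqnn.
case/andP=> st Hp q; rewrite inE => /orP[/eqP ->|qin].
  have := IH p Hp (last p s) (mem_last _ _).
  case: (last p s) => c d; case: p st {Hp IH} => a b; case: p0 => a0 b0 /=.
  case/and3P => /orP[/eqP e1|/eqP e1] /orP[/eqP e2|/eqP e2] _ [] *; simpl in *; split; lia.
have := IH p Hp q qin.
case: (last p s) => c d; case: p st {Hp IH qin} => a b; case: p0 => a0 b0; case: q => e f /=.
case/and3P => /orP[/eqP e1|/eqP e1] /orP[/eqP e2|/eqP e2] _ [] *; simpl in *; split; lia.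
Qed.
Lemma path_cover (p0 : nat * nat) s :
  path trav_step p0 s -> forall i, (p0.1 <= i <= (last p0 s).1)%N ->
  exists2 q, q \in p0 :: s & q.1 = i.
Proof.
elim: s p0 => [|p s IH] p0 /=.
  move=> _ i /andP[h1 h2]; exists p0; first by rewrite inE.
  by apply/eqP; rewrite eqn_leq h1 h2.
case/andP=> st Hp i /andP[h1 h2].
have [e|ne] := eqVneq i p0.1; first by exists p0; rewrite ?inE ?eqxx ?e.
have [q qin qe] : exists2 q, q \in p :: s & q.1 = i.
  apply: IH => //; rewrite h2 andbT.
  move/eqP: ne => ne; rewrite /trav_step in st; case/and3P: st => /orP[/eqP e|/eqP e] _ _; simpl in *; lia.
by exists q => //; rewrite inE qin orbT.
Qed.

Section BigMax.
Variable R : realType.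
Lemma bigmax_ge (T : eqType) (s : seq T) (F : T -> R) p :
  p \in s -> F p <= \big[Num.max/0]_(q <- s) F q.
Proof.
elim: s => // q s IH; rewrite inE big_cons => /orP[/eqP ->|/IH h].
  by rewrite le_max lexx.
by rewrite le_max h orbT.
Qed.
Lemma bigmax_le (T : eqType) (s : seq T) (F : T -> R) M :
  0 <= M -> (forall p, p \in s -> F p <= M) -> \big[Num.max/0]_(q <- s) F q <= M.
Proof.
move=> M0; elim: s => [|q s IH] h; first by rewrite big_nil.
rewrite big_cons ge_max h ?inE ?eqxx //= IH // => p ps.
by apply: h; rewrite inE ps orbT.
Qed.
Lemma bigmax_ge0 (T : eqType) (s : seq T) (F : T -> R) :
  0 <= \big[Num.max/0]_(q <- s) F q.
Proof. by elim: s => [|q s IH]; rewrite ?big_nil // big_cons le_max IH orbT. Qed.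
End BigMax.
Lemma step_cases (p q : nat * nat) : trav_step p q ->
  [\/ q = (p.1, p.2.+1), q = (p.1.+1, p.2) | q = (p.1.+1, p.2.+1)].
Proof.
case: p q => a b [c d]; rewrite /trav_step /=.
case/and3P => /orP[/eqP ec|/eqP ec] /orP[/eqP ed|/eqP ed]; subst.
- by rewrite eqxx.
- by move=> _; constructor 1.
- by move=> _; constructor 2.
- by move=> _; constructor 3.
Qed.

Lemma step_V i t : trav_step (i, t) (i, t.+1).
Proof. by apply/and3P; split; rewrite /= ?eqxx ?orbT //; apply/negP => /eqP [] /eqP; rewrite eqn_leq ltnn andbF. Qed.
Lemma step_H i t : trav_step (i, t) (i.+1, t).
Proof. by apply/and3P; split; rewrite /= ?eqxx ?orbT //; apply/negP => /eqP [] /eqP; rewrite eqn_leq ltnn andbF. Qed.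
Lemma step_D i t : trav_step (i, t) (i.+1, t.+1).
Proof. by apply/and3P; split; rewrite /= ?eqxx ?orbT //; apply/negP => /eqP [] /eqP; rewrite eqn_leq ltnn andbF. Qed.
Section Auto.
Variables (R : realType) (S : finType) (a : S -> R) (l' : nat).

Definition prof := {ffun 'I_l'.+1 -> S * S}.
Definition conf := ('I_l'.+1 * prof)%type.

Definition ext (rg : S * S) (b : S) : S * S :=
  (if a b < a rg.1 then b else rg.1, if a rg.2 < a b then b else rg.2).
Definition upd (r : prof) (j : 'I_l'.+1) (v : S * S) : prof :=
  [ffun k => if k == j then v else r k].
Definition vfill (b : S) (c0 : conf) (t : 'I_l'.+1) : prof :=
  [ffun j : 'I_l'.+1 => if (c0.1 < j)%N && (j <= t)%N then (b, b) else c0.2 j].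
Definition Vc (b : S) (St : {set conf}) : {set conf} :=
  [set c : conf | [exists c0 in St, (c0.1 <= c.1)%N && (c.2 == vfill b c0 c.1)]].
Definition Hs (b : S) (St : {set conf}) : {set conf} :=
  [set ((c.1, upd c.2 c.1 (ext (c.2 c.1) b)) : conf) | c in St].
Definition Ds (b : S) (St : {set conf}) : {set conf} :=
  [set ((inord c.1.+1, upd c.2 (inord c.1.+1) (b, b)) : conf) | c : conf in St & (c.1 < l')%N].
Definition Fst (St : {set conf}) (b : S) : {set conf} := Vc b (Hs b St :|: Ds b St).
Definition rinit (b : S) : prof := [ffun _ => (b, b)].
Definition Gst (b : S) : {set conf} := Vc b [set (ord0, rinit b)].

Definition pstep (f : nat -> S) (pr : (nat * nat) * prof) (q : nat * nat) :
   (nat * nat) * prof :=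
  (q, if q.2 == pr.1.2 then upd pr.2 (inord q.2) (ext (pr.2 (inord q.2)) (f q.1))
      else upd pr.2 (inord q.2) (f q.1, f q.1)).
Definition pfold (f : nat -> S) (s : seq (nat * nat)) :=
  foldl (pstep f) ((0%N, 0%N), rinit (f 0%N)) s.

Lemma pfold_last f s : (pfold f s).1 = last (0%N, 0%N) s.
Proof.
elim/last_ind: s => // s q _.
by rewrite /pfold -cats1 foldl_cat /= last_cat.
Qed.

Lemma pfold_rcons f s q : pfold f (rcons s q) = pstep f (pfold f s) q.
Proof. by rewrite /pfold -cats1 foldl_cat. Qed.

Lemma Vc_sub b (St : {set conf}) (c : conf) : c \in St -> c \in Vc b St.
Proof.
move=> cS; rewrite inE; apply/existsP; exists c; rewrite cS leqnn /=.
apply/eqP/ffunP => j; rewrite ffunE.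
by case: (ltnP c.1 j) => //= h; rewrite leqNgt h.
Qed.

Lemma Vc_step b (St : {set conf}) (c : conf) : c \in Vc b St -> (c.1 < l')%N ->
  ((inord c.1.+1, upd c.2 (inord c.1.+1) (b, b)) : conf) \in Vc b St.
Proof.
rewrite inE => /existsP[c0 /andP[c0S /andP[le0 /eqP e]]] lt.
rewrite inE; apply/existsP; exists c0; rewrite c0S /= inordK ?ltnS //.
rewrite (leq_trans le0) //=; apply/eqP/ffunP => j; rewrite !ffunE e ffunE.
have [->|ne] := eqVneq j (inord c.1.+1).
  by rewrite inordK ?ltnS // le0 leqnn.
rewrite inordK ?ltnS //; case: (ltnP c0.1 j) => //= h.
have -> : (j <= c.1.+1)%N = (j <= c.1)%N.
  rewrite leq_eqVlt ltnS; case: eqP => //= ej; case/eqP: ne.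
  by apply/val_inj; rewrite /= inordK ?ltnS.
by [].
Qed.

Section Run.
Variables (w0 : S) (ws : seq S).
Local Notation f := (nth w0 (w0 :: ws)).
Definition Stk k := foldl Fst (Gst w0) (take k ws).

Lemma Stk_form k : (k <= size ws)%N -> exists St, Stk k = Vc (f k) St.
Proof.
case: k => [|k] h; first by rewrite /Stk take0 /=; eexists.
by rewrite /Stk (take_nth w0) // -cats1 foldl_cat /=; eexists.
Qed.

Lemma Stk_succ k : (k < size ws)%N -> Stk k.+1 = Fst (Stk k) (f k.+1).
Proof. by move=> h; rewrite /Stk (take_nth w0) // -cats1 foldl_cat. Qed.

Lemma path_conf s : path trav_step (0%N, 0%N) s ->
  forall (t : 'I_l'.+1) i, last (0%N, 0%N) s = (i, t : nat) -> (i <= size ws)%N ->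
  ((t, (pfold f s).2) : conf) \in Stk i.
Proof.
elim/last_ind: s => [|s q IH].
  move=> _ t i /= [<- et] _; have -> : t = ord0 by apply/val_inj.
  by rewrite /Stk take0 /= /Gst; apply: Vc_sub; rewrite inE.
rewrite rcons_path last_rcons => /andP[Hs st] t i eq hi.
rewrite pfold_rcons /pstep pfold_last eq /=.
move: st; rewrite eq; case Ep: (last (0%N, 0%N) s) => [p1 p2] st /=.
have [e|e|e] := step_cases st; case: e => e1 e2; subst i.
-
  have pl : (p2 < l')%N by rewrite -ltnS -e2.
  have := IH Hs (inord p2) p1; rewrite inordK ?ltnS ?(ltnW pl) // => /(_ Ep hi) h.
  have [St eSt] := Stk_form hi; rewrite eSt in h *.
  have := Vc_step h; rewrite /= inordK ?ltnS ?(ltnW pl) // => /(_ pl).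
  rewrite e2 eqn_leq ltnn /=.
  have -> : (inord p2.+1 : 'I_l'.+1) = t by apply/val_inj; rewrite /= inordK -e2.
  by rewrite ?inord_val.
-
  have hp : (p1 < size ws)%N by rewrite -ltnS.
  rewrite -e2 in Ep; have h := IH Hs t p1 Ep (ltnW hp).
  rewrite Stk_succ // /Fst; apply: Vc_sub; rewrite inE; apply/orP; left.
  rewrite -e2 eqxx inord_val; apply/imsetP; exists (t, (pfold f s).2) => //.
-
  have hp : (p1 < size ws)%N by rewrite -ltnS.
  have pl : (p2 < l')%N by rewrite -ltnS -e2.
  have := IH Hs (inord p2) p1; rewrite inordK ?ltnS ?(ltnW pl) //.
  move=> /(_ Ep (ltnW hp)) h.
  rewrite Stk_succ // /Fst; apply: Vc_sub; rewrite inE; apply/orP; right.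
  rewrite e2 eqn_leq ltnn /=.
  have -> : (inord p2.+1 : 'I_l'.+1) = t by apply/val_inj; rewrite /= inordK -e2.
  apply/imsetP; exists (inord p2, (pfold f s).2).
    by rewrite inE h /= inordK ?ltnS ?(ltnW pl).
  by rewrite /= inordK ?ltnS ?(ltnW pl) // -e2 inord_val.
Qed.
Lemma vert s i (t0 : 'I_l'.+1) : path trav_step (0%N, 0%N) s ->
  last (0%N, 0%N) s = (i, t0 : nat) -> forall n, (t0 + n < l'.+1)%N ->
  exists s', [/\ path trav_step (0%N, 0%N) s', last (0%N, 0%N) s' = (i, (t0 + n)%N)
   & (pfold f s').2 = vfill (f i) (t0, (pfold f s).2) (inord (t0 + n))].
Proof.
move=> Hs Ls; elim=> [|n IH] hn.
  exists s; rewrite addn0; split => //; apply/ffunP => j; rewrite ffunE /= inord_val.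
  by case: (ltnP t0 j) => //= h; rewrite leqNgt h.
have hn' : (t0 + n < l'.+1)%N by apply: leq_trans hn; rewrite addnS.
have [s' [Hs' Ls' Ps']] := IH hn'.
exists (rcons s' (i, (t0 + n.+1)%N)); split.
- by rewrite rcons_path Hs' Ls' addnS step_V.
- by rewrite last_rcons.
rewrite pfold_rcons /pstep pfold_last Ls' /= addnS eqn_leq ltnn /= Ps'.
apply/ffunP => j; rewrite !ffunE /=.
have [->|ne] := eqVneq j (inord (t0 + n).+1).
  rewrite inordK; last by rewrite -addnS.
  by case: ifP => // /negP []; apply/andP; split; lia.
rewrite !inordK ?(ltnW hn') //; last by rewrite -addnS.
case: (ltnP t0 j) => //= h.
have -> : (j <= (t0 + n).+1)%N = (j <= t0 + n)%N => //.
rewrite leq_eqVlt ltnS; case: eqP => //= ej; case/eqP: ne.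
by apply/val_inj; rewrite /= inordK // -addnS.
Qed.

Lemma conf_path i : (i <= size ws)%N -> forall c : conf, c \in Stk i ->
  exists s, [/\ path trav_step (0%N, 0%N) s, last (0%N, 0%N) s = (i, c.1 : nat)
   & (pfold f s).2 = c.2].
Proof.
elim: i => [|i IH] hi c.
  rewrite /Stk take0 /= /Gst inE => /existsP[c0 /andP[c0in /andP[_ /eqP ->]]].
  move: c0in; rewrite inE => /eqP -> /=.
  have := @vert [::] 0%N ord0 erefl erefl c.1; rewrite add0n => /(_ (ltn_ord _)).
  by case=> s' [H1 H2 H3]; exists s'; split => //; rewrite H3 inord_val.
rewrite Stk_succ // /Fst inE => /existsP[c0 /andP[c0in /andP[le /eqP ->]]].
move: c0in le; rewrite inE => /orP[] /imsetP[c' c'in ->] /= le.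
- have [s1 [H1 H2 H3]] := IH (ltnW hi) c' c'in.
  set s2 := rcons s1 (i.+1, c'.1 : nat).
  have P2 : path trav_step (0%N, 0%N) s2 by rewrite rcons_path H1 H2 step_H.
  have L2 : last (0%N, 0%N) s2 = (i.+1, c'.1 : nat) by rewrite last_rcons.
  have := @vert s2 i.+1 c'.1 P2 L2 (c.1 - c'.1); rewrite subnKC // => /(_ (ltn_ord _)).
  case=> s' [H1' H2' H3']; exists s'; split => //; rewrite H3' inord_val.
  congr vfill; congr pair.
  by rewrite pfold_rcons /pstep pfold_last H2 /= eqxx inord_val H3.
- move: c'in; rewrite inE => /andP[c'in lt].
  have [s1 [H1 H2 H3]] := IH (ltnW hi) c' c'in.
  set s2 := rcons s1 (i.+1, (c'.1).+1).
  have P2 : path trav_step (0%N, 0%N) s2 by rewrite rcons_path H1 H2 step_D.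
  have L2 : last (0%N, 0%N) s2 = (i.+1, (inord (c'.1).+1 : 'I_l'.+1) : nat).
    by rewrite last_rcons inordK.
  have := @vert s2 i.+1 _ P2 L2 (c.1 - (inord (c'.1).+1 : 'I_l'.+1)).
  rewrite subnKC // => /(_ (ltn_ord _)).
  case=> s' [H1' H2' H3']; exists s'; split => //; rewrite H3' inord_val.
  congr vfill; congr pair.
  rewrite pfold_rcons /pstep pfold_last H2 /= eqn_leq ltnn /= H3.
  by [].
Qed.
Definition c1 (rg : S * S) (v : R) := Num.max `|a rg.1 - v| `|a rg.2 - v|.
Definition Phi (y : seq R) (r : prof) :=
  \big[Num.max/0]_(j <- enum 'I_l'.+1) c1 (r j) (nth 0 y j).

Lemma ext_lo rg b : a (ext rg b).1 <= a rg.1 /\ a (ext rg b).1 <= a b.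
Proof. by rewrite /ext /=; case: ltP => h; split => //; apply: ltW. Qed.
Lemma ext_hi rg b : a rg.2 <= a (ext rg b).2 /\ a b <= a (ext rg b).2.
Proof. by rewrite /ext /=; case: ltP => h; split => //; apply: ltW. Qed.

Lemma absbet (lo v hi u : R) : lo <= v <= hi ->
  `|v - u| <= Num.max `|lo - u| `|hi - u|.
Proof.
case/andP => h1 h2; set M := Num.max _ _.
have hM1 : `|lo - u| <= M by rewrite le_max lexx.
have hM2 : `|hi - u| <= M by rewrite le_max lexx orbT.
rewrite ler_norml; apply/andP; split.
- rewrite lerNl opprB; apply: le_trans _ hM1; rewrite distrC.
  by apply: le_trans _ (ler_norm _); rewrite lerD2l lerN2.
- by apply: le_trans _ hM2; apply: le_trans _ (ler_norm _); rewrite lerD2r.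
Qed.

Definition Inv (s : seq (nat * nat)) :=
  forall j : 'I_l'.+1, (j <= (last (0%N, 0%N) s).2)%N ->
  [/\ exists2 q, q \in (0%N, 0%N) :: s & q.2 = j /\ f q.1 = ((pfold f s).2 j).1,
      exists2 q, q \in (0%N, 0%N) :: s & q.2 = j /\ f q.1 = ((pfold f s).2 j).2 &
      forall q, q \in (0%N, 0%N) :: s -> q.2 = j -> a ((pfold f s).2 j).1 <= a (f q.1) <= a ((pfold f s).2 j).2].

Lemma inv_path s : path trav_step (0%N, 0%N) s -> ((last (0%N, 0%N) s).2 <= l')%N -> Inv s.
Proof.
elim/last_ind: s => [|s q IH].
  move=> _ _ j /= j0; have -> : j = ord0 by apply/val_inj/eqP; rewrite -leqn0.
  rewrite /pfold /= ffunE; split.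
  - by exists (0%N, 0%N); rewrite ?inE.
  - by exists (0%N, 0%N); rewrite ?inE.
  by move=> q; rewrite inE => /eqP -> _; rewrite lexx.
rewrite rcons_path last_rcons => /andP[Hs st] ql.
have mono : forall q', q' \in (0%N, 0%N) :: s -> (q'.2 <= (last (0%N, 0%N) s).2)%N.
  by move=> q' /(path_mono Hs) [].
rewrite /Inv pfold_rcons /pstep pfold_last last_rcons /=.
have memE q' : (q' \in (0%N, 0%N) :: rcons s q) = (q' == q) || (q' \in (0%N, 0%N) :: s).
  by rewrite !inE mem_rcons inE orbCA.
move: st mono; case Ep: (last (0%N, 0%N) s) => [p1 p2] st mono.
have IHs : Inv s.
  apply: IH => //; rewrite Ep /=; apply: leq_trans ql.
  by case: (step_cases st) => ->.
move: IHs; rewrite /Inv Ep /= => IHs j hj.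
set r' := (pfold f s).2.
have [e|e|e] := step_cases st; subst q => /=.
-
  have pl : (p2 < l')%N by [].
  rewrite (eqn_leq p2.+1) ltnn /= ffunE.
  have [ej|nej] := eqVneq j (inord p2.+1).
    have jv : (j : nat) = p2.+1 by rewrite ej inordK.
    split.
    - by exists (p1, p2.+1); rewrite ?memE ?eqxx.
    - by exists (p1, p2.+1); rewrite ?memE ?eqxx.
    move=> q'; rewrite memE => /orP[/eqP -> _|/mono qin qj]; first by rewrite lexx.
    by move: qin; rewrite qj jv ltnn.
  have hj' : (j <= p2)%N.
    move: hj; rewrite leq_eqVlt ltnS; case: eqP => //= ej; case/eqP: nej.
    by apply/val_inj; rewrite /= inordK.
  have [[q1 q1in q1e] [q2 q2in q2e] H] := IHs j hj'; split.
  - by exists q1; rewrite // memE q1in orbT.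
  - by exists q2; rewrite // memE q2in orbT.
  move=> q'; rewrite memE => /orP[/eqP -> /= qj|qin qj]; last exact: H.
  by move: hj'; rewrite -qj ltnn.
-
  rewrite eqxx ffunE.
  have [ej|nej] := eqVneq j (inord p2).
    have jv : (j : nat) = p2 by rewrite ej inordK // (leq_trans hj).
    rewrite -ej.
    have [[q1 q1in q1e] [q2 q2in q2e] H] := IHs j (eq_leq jv).
    have [lo1 lo2] := ext_lo (r' j) (f p1.+1).
    have [hi1 hi2] := ext_hi (r' j) (f p1.+1).
    split.
    - rewrite /ext /=; case: ifP => _.
        by exists (p1.+1, p2); rewrite ?memE ?eqxx.
      by exists q1; rewrite // memE q1in orbT.
    - rewrite /ext /=; case: ifP => _.
        by exists (p1.+1, p2); rewrite ?memE ?eqxx.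
      by exists q2; rewrite // memE q2in orbT.
    move=> q'; rewrite memE => /orP[/eqP -> /= _|qin qj]; first by rewrite lo2 hi2.
    have /andP[h1 h2] := H q' qin qj.
    by rewrite (le_trans lo1 h1) (le_trans h2 hi1).
  have hj' : (j < p2)%N.
    rewrite ltn_neqAle hj andbT; apply/eqP => ej; case/eqP: nej.
    by apply/val_inj; rewrite /= inordK // -ej.
  have [[q1 q1in q1e] [q2 q2in q2e] H] := IHs j (ltnW hj'); split.
  - by exists q1; rewrite // memE q1in orbT.
  - by exists q2; rewrite // memE q2in orbT.
  move=> q'; rewrite memE => /orP[/eqP -> /= qj|qin qj]; last exact: H.
  by move: hj'; rewrite -qj ltnn.
-
  rewrite (eqn_leq p2.+1) ltnn /= ffunE.
  have [ej|nej] := eqVneq j (inord p2.+1).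
    have jv : (j : nat) = p2.+1 by rewrite ej inordK.
    split.
    - by exists (p1.+1, p2.+1); rewrite ?memE ?eqxx.
    - by exists (p1.+1, p2.+1); rewrite ?memE ?eqxx.
    move=> q'; rewrite memE => /orP[/eqP -> _|/mono qin qj]; first by rewrite lexx.
    by move: qin; rewrite qj jv ltnn.
  have hj' : (j <= p2)%N.
    move: hj; rewrite leq_eqVlt ltnS; case: eqP => //= ej; case/eqP: nej.
    by apply/val_inj; rewrite /= inordK.
  have [[q1 q1in q1e] [q2 q2in q2e] H] := IHs j hj'; split.
  - by exists q1; rewrite // memE q1in orbT.
  - by exists q2; rewrite // memE q2in orbT.
  move=> q'; rewrite memE => /orP[/eqP -> /= qj|qin qj]; last exact: H.
  by move: hj'; rewrite -qj ltnn.
Qed.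
Lemma cost_eq s (y : seq R) : path trav_step (0%N, 0%N) s ->
  last (0%N, 0%N) s = (size ws, l') ->
  trav_cost (map a (w0 :: ws)) y ((0%N, 0%N) :: s) = Phi y (pfold f s).2.
Proof.
move=> Hs Ls.
have I : Inv s by apply: inv_path => //; rewrite Ls.
rewrite /Inv Ls /= in I.
have bnd q : q \in (0%N, 0%N) :: s -> (q.1 <= size ws)%N /\ (q.2 <= l')%N.
  by move=> /(path_mono Hs) []; rewrite Ls.
have xq q : q \in (0%N, 0%N) :: s -> nth 0 (map a (w0 :: ws)) q.1 = a (f q.1).
  by move=> /bnd [h _]; rewrite (nth_map w0) // /= ltnS.
apply/eqP; rewrite eq_le; apply/andP; split.
- apply: bigmax_le; first exact: bigmax_ge0.
  move=> q qin; rewrite xq //.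
  have [_ ql] := bnd q qin.
  pose j : 'I_l'.+1 := inord q.2.
  have jv : (j : nat) = q.2 by rewrite inordK.
  have jl : (j <= l')%N by rewrite jv.
  have [_ _ H] := I j jl.
  have hb := H q qin (esym jv).
  apply: le_trans (absbet _ hb) _.
  rewrite -jv; apply: (bigmax_ge (fun j => c1 ((pfold f s).2 j) (nth 0 y j))).
  by rewrite mem_enum.
- apply: bigmax_le; first exact: bigmax_ge0.
  move=> j _.
  have jl : (j <= l')%N by rewrite -ltnS.
  have [[q1 q1in [q1e1 q1e2]] [q2 q2in [q2e1 q2e2]] _] := I j jl.
  rewrite /c1 ge_max; apply/andP; split.
  + rewrite -q1e2 -xq // -q1e1.
    exact: (bigmax_ge (fun p => `|nth 0 (map a (w0 :: ws)) p.1 - nth 0 y p.2|)).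
  + rewrite -q2e2 -xq // -q2e1.
    exact: (bigmax_ge (fun p => `|nth 0 (map a (w0 :: ws)) p.1 - nth 0 y p.2|)).
Qed.

Definition FinalVals (y : seq R) : set R :=
  fun v => exists r, ((ord_max, r) : conf) \in Stk (size ws) /\ v = Phi y r.

Lemma dF_final (y : seq R) : size y = l'.+1 ->
  dF (map a (w0 :: ws)) y = inf (FinalVals y).
Proof.
move=> sy; rewrite /dF; congr inf; apply/seteqP; split => v /=.
- case=> T [[s [-> [Hs Ls]]] ->].
  rewrite size_map sy /= in Ls.
  rewrite /FinalVals.
  exists (pfold f s).2; split; last by rewrite cost_eq.
  by apply: path_conf => //; rewrite Ls.
- case=> r [rin ->].
  have [s [Hs Ls Ps]] := conf_path (leqnn _) rin.
  exists ((0%N, 0%N) :: s); split; last by rewrite cost_eq // Ps.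
  by exists s; split => //; rewrite size_map sy /= Ls.
Qed.
End Run.

Lemma pump (w0 : S) n : forall ws : seq S, (size ws < n)%N ->
  exists ws' : seq S, (size ws' < #|{set conf}|)%N /\
     foldl Fst (Gst w0) ws' = foldl Fst (Gst w0) ws.
Proof.
elim: n => [|n IH] ws hn //.
case: (ltnP (size ws) #|{set conf}|) => hc; first by exists ws.
pose sq := [seq Stk w0 ws k | k <- iota 0 (size ws).+1].
have nu : ~~ uniq sq.
  apply/negP => /card_uniqP e.
  have hm := max_card (mem sq).
  move: hm; rewrite e size_map size_iota => hm.
  by move: (leq_trans hm hc); rewrite ltnn.
have [i [j [ij js e]]] := uniqPn (Gst w0) nu.
rewrite size_map size_iota in js.
rewrite !(nth_map 0%N) ?size_iota ?(ltn_trans ij) // !nth_iota ?(ltn_trans ij) // in e.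
rewrite !add0n in e.
have hs : (size (take i ws ++ drop j ws) < n)%N.
  rewrite size_cat size_take size_drop.
  have -> : (if (i < size ws)%N then i else size ws) = i.
    by case: ifP => // /negP h; exfalso; apply: h; move: js ij; rewrite ltnS; lia.
  move: hn js ij; rewrite ltnS; lia.
have [ws'' [h1 h2]] := IH _ hs.
exists ws''; split => //; rewrite h2 foldl_cat.
have -> : foldl Fst (Gst w0) (take i ws) = Stk w0 ws i by [].
rewrite e /Stk -foldl_cat cat_take_drop //.
Qed.

Lemma compress (w0 : S) ws : exists ws' : seq S, (size ws' < #|{set conf}|)%N /\
  forall y : seq R, size y = l'.+1 ->
    dF (map a (w0 :: ws')) y = dF (map a (w0 :: ws)) y.
Proof.
have [ws' [h1 h2]] := pump w0 (ltnSn (size ws)).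
exists ws'; split => // y sy; rewrite !dF_final //; congr inf.
rewrite /FinalVals.
have -> : Stk w0 ws' (size ws') = Stk w0 ws (size ws) by rewrite /Stk !take_size.
by [].
Qed.

Lemma card_conf_set : #|{set conf}| = (2 ^ (l'.+1 * (#|S| * #|S|) ^ l'.+1))%N.
Proof.
have := card_powerset [set: conf]; rewrite powersetT !cardsT => ->.
by rewrite card_prod card_ord card_ffun card_prod card_ord.
Qed.
End Auto.

Lemma trav_exists z l : (0 < z)%N -> (0 < l)%N -> exists T, traversal z l T.
Proof.
move=> z0 l0.
have H1 i : exists s, path trav_step (0%N, 0%N) s /\ last (0%N, 0%N) s = (i, 0%N).
  elim: i => [|i [s [Hs Ls]]]; first by exists [::].
  by exists (rcons s (i.+1, 0%N)); rewrite rcons_path Hs Ls last_rcons step_H.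
have H2 j : exists s, path trav_step (0%N, 0%N) s /\ last (0%N, 0%N) s = (z.-1, j).
  elim: j => [|j [s [Hs Ls]]]; first exact: H1.
  by exists (rcons s (z.-1, j.+1)); rewrite rcons_path Hs Ls last_rcons step_V.
have [s [Hs Ls]] := H2 l.-1.
by exists ((0%N, 0%N) :: s); exists s.
Qed.

Section DF.
Variable R : realType.
Implicit Types x y : seq R.

Definition costs x y : set R :=
  fun r => exists T, traversal (size x) (size y) T /\ r = trav_cost x y T.

Lemma costs_ne x y : (0 < size x)%N -> (0 < size y)%N -> (costs x y !=set0)%classic.
Proof.
move=> hx hy; have [T hT] := trav_exists hx hy.
by exists (trav_cost x y T), T.
Qed.

Lemma costs_lb x y : lbound (costs x y) 0.
Proof. by move=> r [T [_ ->]]; apply: bigmax_ge0. Qed.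

Lemma dF_le x y T : traversal (size x) (size y) T -> dF x y <= trav_cost x y T.
Proof.
move=> hT; apply: (ge_inf (E := costs x y)); last by exists T.
by exists 0; apply: costs_lb.
Qed.

Lemma dF_ge x y M : (0 < size x)%N -> (0 < size y)%N ->
  (forall T, traversal (size x) (size y) T -> M <= trav_cost x y T) -> M <= dF x y.
Proof.
move=> hx hy H; apply: lb_le_inf; first exact: costs_ne.
by move=> r [T [hT ->]]; apply: H.
Qed.

Lemma dF_ge0 x y : (0 < size x)%N -> (0 < size y)%N -> 0 <= dF x y.
Proof. by move=> hx hy; apply: dF_ge => // T _; apply: bigmax_ge0. Qed.

Lemma dF_lt x y e : (0 < size x)%N -> (0 < size y)%N -> dF x y < e ->
  exists2 T, traversal (size x) (size y) T & trav_cost x y T < e.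
Proof.
move=> hx hy h; have [r [T [hT ->]] hr] := inf_lt (costs_ne hx hy) h.
by exists T.
Qed.

Lemma dF_perturb x1 x2 y (d : R) : size x1 = size x2 ->
  (0 < size x1)%N -> (0 < size y)%N -> 0 <= d ->
  (forall i, `|nth 0 x1 i - nth 0 x2 i| <= d) -> dF x1 y <= dF x2 y + d.
Proof.
move=> e hx hy d0 H; rewrite -lerBlDr; apply: dF_ge => //; first by rewrite -e.
move=> T hT; rewrite lerBlDr.
have hT1 : traversal (size x1) (size y) T by rewrite e.
apply: le_trans (dF_le hT1) _.
apply: bigmax_le; first by rewrite addr_ge0 // bigmax_ge0.
move=> p pT; apply: le_trans (ler_distD (nth 0 x2 p.1) _ _) _.
rewrite [X in _ <= X]addrC; apply: lerD; first exact: H.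
exact: (bigmax_ge (fun p => `|nth 0 x2 p.1 - nth 0 y p.2|)).
Qed.
End DF.

Lemma trav_bnd z l T : (0 < z)%N -> (0 < l)%N -> traversal z l T ->
  forall q, q \in T -> (q.1 < z)%N /\ (q.2 < l)%N.
Proof.
move=> z0 l0 [s [-> [Hs Ls]]] q /(path_mono Hs) [_ _]; rewrite Ls /= => h1 h2.
by split; lia.
Qed.

Lemma trav_cover z l T : (0 < z)%N -> traversal z l T ->
  forall i, (i < z)%N -> exists2 q, q \in T & q.1 = i.
Proof.
move=> z0 [s [-> [Hs Ls]]] i hi; apply: (path_cover Hs); rewrite Ls /=; lia.
Qed.

Section DF2.
Variable R : realType.
Implicit Types x y : seq R.

Lemma pigeon x y T : (0 < size x)%N -> (0 < size y)%N ->
  traversal (size x) (size y) T -> (size y < size (undup x))%N ->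
  exists u v, [/\ u \in x, v \in x, u != v & `|u - v| <= 2 * trav_cost x y T].
Proof.
move=> hx hy hT hu.
pose P u := fun q : nat * nat => nth 0 x q.1 == u.
pose g u := (nth (0%N, 0%N) T (find (P u) T)).2.
have Pg u : u \in x -> has (P u) T.
  move=> ux; have ui : (index u x < size x)%N by rewrite index_mem.
  have [q qT qe] := trav_cover hx hT ui.
  by apply/hasP; exists q => //; rewrite /P qe nth_index.
have gT u : u \in x -> nth (0%N, 0%N) T (find (P u) T) \in T.
  by move=> /Pg h; rewrite mem_nth // -has_find.
have gP u : u \in x -> P u (nth (0%N, 0%N) T (find (P u) T)).
  by move=> /Pg h; apply: nth_find.
have gl u : u \in x -> (g u < size y)%N.
  by move=> /gT h; have [_ ->] := trav_bnd hx hy hT h.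
have nu : ~~ uniq (map g (undup x)).
  apply/negP => un.
  have sub : {subset map g (undup x) <= iota 0 (size y)}.
    by move=> u /mapP[v vx ->]; rewrite mem_iota add0n gl // -mem_undup.
  by have := uniq_leq_size un sub; rewrite size_map size_iota leqNgt hu.
have [i [j [ij js e]]] := uniqPn 0%N nu.
rewrite size_map in js.
rewrite !(nth_map 0) ?(ltn_trans ij) // in e.
set u := nth 0 (undup x) i in e; set v := nth 0 (undup x) j in e.
have ux : u \in x by rewrite -mem_undup mem_nth // (ltn_trans ij).
have vx : v \in x by rewrite -mem_undup mem_nth.
exists u, v; split => //.
  rewrite /u /v nth_uniq ?undup_uniq ?(ltn_trans ij) //.
  by rewrite neq_ltn ij.
have cu := bigmax_ge (fun p => `|nth 0 x p.1 - nth 0 y p.2|) (gT u ux).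
have cv := bigmax_ge (fun p => `|nth 0 x p.1 - nth 0 y p.2|) (gT v vx).
rewrite /= (eqP (gP u ux)) in cu; rewrite /= (eqP (gP v vx)) in cv.
rewrite -/(g u) in cu; rewrite -/(g v) -e in cv.
apply: le_trans (ler_distD (nth 0 y (g u)) _ _) _.
by rewrite mulr2n mulrDl mul1r lerD // distrC.
Qed.
End DF2.

Section Gap.
Variable R : realType.
Implicit Types x y : seq R.
Definition gaps x : seq R :=
  [seq `|p.1 - p.2| | p <- [seq p <- [seq (u, v) | u <- x, v <- x] | p.1 != p.2]].
Definition gap x := foldr Num.min 1 (gaps x).

Lemma foldr_min_gt0 (s : seq R) : (forall r, r \in s -> 0 < r) -> 0 < foldr Num.min 1 s.
Proof.
elim: s => [|r s IH] H /=; first exact: ltr01.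
rewrite lt_min H ?inE ?eqxx //= IH // => r' rs; apply: H; by rewrite inE rs orbT.
Qed.
Lemma foldr_min_le (s : seq R) r : r \in s -> foldr Num.min 1 s <= r.
Proof.
elim: s => [|r' s IH] //=; rewrite inE => /orP[/eqP ->|/IH h]; rewrite ge_min ?lexx //.
by rewrite h orbT.
Qed.

Lemma gap_gt0 x : 0 < gap x.
Proof.
apply: foldr_min_gt0 => r /mapP[p]; rewrite mem_filter => /andP[ne _] ->.
by rewrite normr_gt0 subr_eq0.
Qed.

Lemma gap_le x u v : u \in x -> v \in x -> u != v -> gap x <= `|u - v|.
Proof.
move=> ux vx ne; apply: foldr_min_le; apply/mapP; exists (u, v) => //.
by rewrite mem_filter ne /=; apply: allpairs_f.
Qed.

Lemma dF_gap x y : (0 < size x)%N -> (0 < size y)%N -> (size y < size (undup x))%N ->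
  gap x / 2 <= dF x y.
Proof.
move=> hx hy hu; apply: dF_ge => // T hT.
have [u [v [ux vx ne le]]] := pigeon hx hy hT hu.
rewrite ler_pdivrMr // mulrC; apply: le_trans le; exact: gap_le.
Qed.
End Gap.

Lemma compress_seq (R : realType) (S : finType) (a : S -> R) (l' : nat) (w : seq S) :
  (0 < size w)%N -> exists x' : seq R,
   [/\ (0 < size x')%N, (size x' <= 2 ^ (l'.+1 * (#|S| * #|S|) ^ l'.+1))%N &
   forall y : seq R, size y = l'.+1 -> dF x' y = dF (map a w) y].
Proof.
case: w => // w0 ws _.
have [ws' [h1 h2]] := compress a l' w0 ws.
exists (map a (w0 :: ws')); split => //.
by rewrite size_map -card_conf_set.
Qed.

Lemma approx_A (R : realType) (eps : R) l' (x : seq R) : 0 < eps < 1 ->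
  (0 < size x)%N -> (size (undup x) <= l'.+1)%N ->
  exists x' : seq R,
   [/\ (0 < size x')%N, (size x' <= 2 ^ (l'.+1 * ((l'.+1 * (2 * 1).+1) * (l'.+1 * (2 * 1).+1)) ^ l'.+1))%N &
   forall y : seq R, size y = l'.+1 ->
     (1 - eps) * dF x y <= dF x' y <= (1 + eps) * dF x y].
Proof.
move=> /andP[e0 e1] hx hu.
pose letter i : ('I_l'.+1 * 'I_(2 * 1).+1)%type := (inord (index (nth 0 x i) (undup x)), ord0).
pose a (c : ('I_l'.+1 * 'I_(2 * 1).+1)%type) := nth 0 (undup x) c.1.
have hw : (0 < size (map letter (iota 0 (size x))))%N by rewrite size_map size_iota.
have [x' [h1 h2 h3]] := compress_seq a l' hw.
have ex : map a (map letter (iota 0 (size x))) = x.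
  apply: (@eq_from_nth _ 0); first by rewrite !size_map size_iota.
  move=> i; rewrite !size_map size_iota => hi.
  rewrite -map_comp (nth_map 0%N) ?size_iota // nth_iota // add0n /=.
  rewrite /a /letter /= inordK ?nth_index ?mem_undup ?mem_nth //.
  by apply: leq_trans hu; rewrite index_mem mem_undup mem_nth.
exists x'; split => //.
  by move: h2; rewrite card_prod !card_ord.
move=> y sy; rewrite h3 // ex.
have d0 : 0 <= dF x y by apply: dF_ge0; rewrite // sy.
apply/andP; split.
  by rewrite -[X in _ <= X]mul1r ler_wpM2r // lerBlDr lerDl ltW.
by rewrite -[X in X <= _]mul1r ler_wpM2r // lerDl ltW.
Qed.

Lemma approx_B (R : realType) (eps : R) l' (x : seq R) : 0 < eps < 1 ->
  (0 < size x)%N -> (l'.+1 < size (undup x))%N ->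
  exists M : nat, [/\ (0 < M)%N, M%:R <= 4 / eps + 1 &
  exists x' : seq R,
   [/\ (0 < size x')%N,
       (size x' <= 2 ^ (l'.+1 * ((l'.+1 * (2 * M).+1) * (l'.+1 * (2 * M).+1)) ^ l'.+1))%N &
   forall y : seq R, size y = l'.+1 ->
     (1 - eps) * dF x y <= dF x' y <= (1 + eps) * dF x y]].
Proof.
move=> /andP[e0 e1] hx hu.
pose Dset : set R := fun r => exists y, size y = l'.+1 /\ r = dF x y.
pose Lm := inf Dset.
have Dne : (Dset !=set0)%classic.
  by exists (dF x (nseq l'.+1 0)), (nseq l'.+1 0); rewrite size_nseq.
have Dlb : lbound Dset (gap x / 2).
  by move=> r [y [sy ->]]; apply: dF_gap; rewrite ?sy.
have Lpos : 0 < Lm.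
  by apply: lt_le_trans (lb_le_inf Dne Dlb); rewrite divr_gt0 ?gap_gt0.
have Lle y : size y = l'.+1 -> Lm <= dF x y.
  move=> sy; apply: (ge_inf (E := Dset)); last by exists y.
  by exists (gap x / 2).
have lt2 : Lm < Lm *+ 2 by rewrite mulr2n ltrDl.
have [r [ys [sys ->]] hr] := inf_lt Dne lt2.
have ys0 : (0 < size ys)%N by rewrite sys.
have [T hT hc] := dF_lt hx ys0 hr.
pose h := eps * Lm / 2.
have h0 : 0 < h by rewrite divr_gt0 ?mulr_gt0.
pose M := (Num.truncn (4 / eps)).+1.
have e4 : 0 <= 4 / eps by rewrite divr_ge0 // ltW.
have M1 : 4 / eps < M%:R by apply: truncnS_gt.
have M2 : M%:R <= 4 / eps + 1 by rewrite /M -addn1 natrD lerD2r truncn_le.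
pose P i := fun q : nat * nat => q.1 == i.
pose q i := nth (0%N, 0%N) T (find (P i) T).
pose J i := (q i).2.
have qT i : (i < size x)%N -> q i \in T /\ (q i).1 = i.
  move=> hi; have [q0 q0T q0e] := trav_cover hx hT hi.
  have hs : has (P i) T by apply/hasP; exists q0 => //; rewrite /P q0e.
  by split; [rewrite mem_nth // -has_find | apply/eqP; apply: (nth_find _ hs)].
have Jl i : (i < size x)%N -> (J i < l'.+1)%N.
  by move=> /qT [h1 _]; have [_] := trav_bnd hx ys0 hT h1; rewrite sys.
have Jc i : (i < size x)%N -> `|nth 0 x i - nth 0 ys (J i)| < Lm *+ 2.
  move=> /qT [h1 h2]; apply: le_lt_trans hc.
  have := bigmax_ge (fun p => `|nth 0 x p.1 - nth 0 ys p.2|) h1.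
  by rewrite /= h2.
pose u i := (nth 0 x i - nth 0 ys (J i)) / h.
have ub i : (i < size x)%N -> `|u i| < M%:R.
  move=> hi; rewrite /u normrM normfV (gtr0_norm h0) ltr_pdivrMr //.
  apply: lt_le_trans (Jc i hi) _.
  apply: le_trans (_ : 4 / eps * h <= _); last by rewrite ler_wpM2r // ltW.
  have -> : 4 / eps * h = Lm *+ 2.
    by rewrite /h mulr2n; field; rewrite lt0r_neq0.
  by [].
pose k i : int := Num.floor (u i) + M%:Z.
have kb i : (i < size x)%N -> (0 <= k i)%R /\ (k i < (M + M)%N%:Z)%R.
  move=> hi; have := ub i hi; rewrite ltr_norml => /andP[l1 l2].
  have f1 : (- (M%:Z) <= Num.floor (u i))%R.
    by rewrite floor_ge_int mulrNz ltW.
  have f2 : (Num.floor (u i) < M%:Z)%R by rewrite floor_lt_int.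
  rewrite /k; split; lia.
pose n i := `|k i|%N.
have nk i : (i < size x)%N -> (n i)%:R = (k i)%:~R :> R.
  by move=> hi; rewrite /n natr_absz ger0_norm //; case: (kb i hi).
have nb i : (i < size x)%N -> (n i < (2 * M).+1)%N.
  move=> hi; have [k1 k2] := kb i hi; rewrite /n; lia.
pose letter i : ('I_l'.+1 * 'I_(2 * M).+1)%type := (inord (J i), inord (n i)).
pose a (c : ('I_l'.+1 * 'I_(2 * M).+1)%type) :=
  nth 0 ys c.1 + h * ((c.2 : nat)%:R - M%:R).
have ha i : (i < size x)%N ->
    a (letter i) = nth 0 ys (J i) + h * (Num.floor (u i))%:~R.
  move=> hi; rewrite /a /letter /= !inordK ?Jl ?nb // nk // /k intrD.
  by rewrite addrK.
pose w := map letter (iota 0 (size x)).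
pose xt := map a w.
have sxt : size xt = size x by rewrite !size_map size_iota.
have err i : `|nth 0 x i - nth 0 xt i| <= h.
  case: (ltnP i (size x)) => hi; last first.
    by rewrite !nth_default ?sxt // subrr normr0 ltW.
  rewrite /xt /w -map_comp (nth_map 0%N) ?size_iota // nth_iota // add0n /= ha //.
  have hu' : nth 0 x i - nth 0 ys (J i) = h * u i.
    by rewrite /u mulrC divfK // lt0r_neq0.
  rewrite opprD addrA hu' -mulrBr normrM (gtr0_norm h0).
  apply: ler_piMr; first exact: ltW.
  have g1 := floor_le (u i); have g2 := floorD1_gt (u i).
  rewrite intrD in g2.
  by rewrite ger0_norm ?subr_ge0 // lerBlDl ltW.
have hw : (0 < size w)%N by rewrite size_map size_iota.
have [x' [h1 h2 h3]] := compress_seq a l' hw.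
exists M; split => //; exists x'; split => //.
  by move: h2; rewrite card_prod !card_ord.
move=> y sy; rewrite h3 // -/xt.
have y0 : (0 < size y)%N by rewrite sy.
have hB1 : dF xt y <= dF x y + h.
  apply: dF_perturb => //; rewrite ?sxt ?ltW // => i; rewrite distrC; exact: err.
have hB2 : dF x y <= dF xt y + h by apply: dF_perturb => //; rewrite ?ltW.
have hA := Lle y sy.
have A0 : 0 <= dF x y by apply: dF_ge0.
have ht : h <= eps * dF x y / 2.
  rewrite /h; apply: ler_wpM2r; first by rewrite invr_ge0.
  by apply: ler_wpM2l => //; exact: ltW.
rewrite mulrBl mulrDl !mul1r.
set A := dF x y in hB1 hB2 ht A0 *; set B := dF xt y in hB1 hB2 *.
set t := eps * A in ht *.
have t0 : 0 <= t by rewrite /t mulr_ge0 // ltW.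
apply/andP; split; lra.
Qed.

Lemma size_bound (R : realType) (eps : R) (L M n : nat) : 0 < eps < 1 ->
  (0 < L)%N -> (0 < M)%N -> M%:R <= 4 / eps + 1 ->
  (n <= 2 ^ (L * ((L * (2 * M).+1) * (L * (2 * M).+1)) ^ L))%N ->
  n%:R <= powR 2 ((11 * L%:R / eps) ^+ (2 * L + 2)%N).
Proof.
move=> /andP[e0 e1] L0 M0 hM hn.
set S := (L * (2 * M).+1)%N.
set E := (L * (S * S) ^ L)%N.
have S1 : (L <= S)%N by rewrite /S leq_pmulr.
have S0 : (0 < S)%N by apply: leq_trans S1.
have ES : (E <= S ^ (2 * L + 2))%N.
  rewrite /E expnMn -expnD addnn -mul2n.
  apply: (@leq_trans (S * S ^ (2 * L))); first by rewrite leq_mul2r S1 orbT.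
  by rewrite -expnS leq_pexp2l // addn2.
apply: (@le_trans _ _ (2 ^ E)%:R); first by rewrite ler_nat.
rewrite natrX -powR_mulrn ?ler0n //; apply: ler_powR; first by rewrite ler1n.
apply: (@le_trans _ _ (S ^ (2 * L + 2))%:R); first by rewrite ler_nat.
rewrite natrX; apply: lerXn2r; rewrite ?nnegrE ?ler0n //.
  apply: divr_ge0; last exact: ltW.
  by apply: mulr_ge0; rewrite ?ler0n.
have ie1 : 1 <= eps^-1 by rewrite invr_ge1 // ?unitfE ?lt0r_neq0 // ltW.
rewrite /S natrM mulrC mulrAC ler_wpM2r ?ler0n //.
rewrite -addn1 natrD natrM /=.
set ie := eps^-1 in hM ie1 *.
lra.
Qed.

Unset Implicit Arguments.
Set Strict Implicit.

Theorem corollary9p12 (R : realType) :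
  exists C c : R, 0 < C /\ 0 < c /\
  forall (eps : R) (l z : nat) (x : seq R),
    0 < eps < 1 -> (0 < l)%N -> (0 < z)%N -> size x = z ->
    exists x' : seq R,
      (0 < size x')%N /\
      (size x')%:R <= C * powR 2 ((c * l%:R / eps) ^+ (2 * l + 2)) /\
      forall y : seq R, size y = l ->
        (1 - eps) * dF x y <= dF x' y /\ dF x' y <= (1 + eps) * dF x y.
Proof.
exists 1, 11; split; first exact: ltr01.
split; first by rewrite ltr0n.
move=> eps [//|l'] z x he _ z0 sx.
have hx : (0 < size x)%N by rewrite sx.
have [M [M0 hM [x' [h1 h2 h3]]]] : exists M : nat, [/\ (0 < M)%N, M%:R <= 4 / eps + 1 &
  exists x' : seq R,
   [/\ (0 < size x')%N,
       (size x' <= 2 ^ (l'.+1 * ((l'.+1 * (2 * M).+1) * (l'.+1 * (2 * M).+1)) ^ l'.+1))%N &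
   forall y : seq R, size y = l'.+1 ->
     (1 - eps) * dF x y <= dF x' y <= (1 + eps) * dF x y]].
  case: (leqP (size (undup x)) l'.+1) => hu; last exact: approx_B.
  exists 1%N; split => //; last exact: approx_A.
  case/andP: he => e0 e1.
  by rewrite lerDr divr_ge0 // ltW.
exists x'; split => //; split.
  rewrite mul1r; have := size_bound he (ltn0Sn l') M0 hM h2.
  by move=> H; exact: H.
by move=> y sy; apply/andP; apply: h3.
Qed.
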